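(* For all $i\in I_d$, the element $\hat x_i^l$ of $\mathcal{S}^f_d$ lies in $F_{l-1}\mathcal{S}^f_d$, and its image $\operatorname{gr}_{l-1}\hat x_i^l$ in $F_{l-1}\mathcal{S}^f_d/F_{l-2}\mathcal{S}^f_d\subseteq\operatorname{gr}\mathcal{S}^f_d$ equals $y_i(l)=\sum_{j=1}^{i-1}(i,j)^{(0)}$.
   Context: Fix a commutative ring $R$ and integers $l,d\ge1$; $I_a=\{1,\dots,a\}$. $\mathcal{S}_d$ is the superalgebra over $R$ generated by even $\hat s_1,\dots,\hat s_{d-1}$, $\hat x_1,\dots,\hat x_d$ and odd $\hat c_1,\dots,\hat c_d$ with relations: the $\hat s_i$ satisfy the Coxeter relations of $\Sigma_d$; the $\hat x_i$ commute; $\hat c_i^2=1$, $\hat c_i\hat c_j=-\hat c_j\hat c_i$ ($i\neq j$); $\hat x_i\hat c_i=-\hat c_i\hat x_i$, $\hat x_i\hat c_j=\hat c_j\hat x_i$ ($j\ne i$); $\hat s_i\hat c_i=\hat c_{i+1}\hat s_i$, $\hat s_i\hat c_j=\hat c_j\hat s_i$ ($j\ne i,i+1$); $\hat s_i\hat x_i=\hat x_{i+1}\hat s_i-1-\hat c_i\hat c_{i+1}$, $\hat s_i\hat x_j=\hat x_j\hat s_i$ ($j\ne i,i+1$). Let $f(x)=x^l+b_{l-2}x^{l-2}+b_{l-4}x^{l-4}+\cdots\in R[x]$ (monic of degree $l$, all terms of the same parity as $l$), and $\mathcal{S}^f_d=\mathcal{S}_d/(f(\hat x_1))$. $F_k\mathcal{S}^f_d$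 is the span of products of generators with at most $k$ polynomial generators $\hat x_j$. The associated graded $\operatorname{gr}\mathcal{S}^f_d$ is identified (via $\hat x_i\mapsto x_i$, $\hat s_i\mapsto(i,i+1)$, $\hat c_i\mapsto c_i$) with the $R$-superalgebra $\mathcal{G}$ free on $\{x_1^{m_1}\cdots x_d^{m_d}wc_1^{e_1}\cdots c_d^{e_d}:0\le m_i\le l-1, w\in\Sigma_d, e_i\in\{0,1\}\}$ with: $x_i$ commuting, $x_i^l=0$; $\Sigma_d$ multiplied as a group (composition right to left); $c_i^2=1$, $c_ic_j=-c_jc_i$; $wx_i=x_{w(i)}w$, $wc_i=c_{w(i)}w$; $x_ic_i=-c_ix_i$, $x_ic_j=c_jx_i$ ($i\neq j$); $\operatorname{gr}_k$ denotes the map $F_k\to F_k/F_{k-1}$. For an ordered tuple $A=(i_1,\dots,i_a)$ of distinct elements of $I_d$, $\sigma_A$ is the cycle $i_1\mapsto\dots\mapsto i_a\mapsto i_1$. For $\alpha\in\mathbb{Z}_2^a$: $|\alpha|=\sum\alpha_j$; $\mathbb{Z}_2^{a,\mathrm{ev}}$ the $\alpha$ with $|\alpha|$ even; $c_\alpha(A)=c_{i_1}^{\alpha_1}\cdots c_{i_a}^{\alpha_a}$; $\epsilon^\alpha_j=\prod_{k<j}(-1)^{\alpha_k}$; $h^\alpha_r(A)=\sum_{r_1+\dots+r_a=(a-1)(l-1)+r,\,r_j\ge0}\prod_j(\epsilon^\alpha_jx_{i_j})^{r_j}$; $A^{(r,\alpha)}=h^\alpha_r(A)\sigma_Ac_\alpha(A)$;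 $\tau_\alpha=(-1)^{|\alpha|/2+\sum_j j\alpha_j}$; $A^{(r)}=\sum_{\alpha\in\mathbb{Z}_2^{a,\mathrm{ev}}}\tau_\alpha A^{(r,\alpha)}$. In particular $(i,j)^{(0)}$ is $A^{(0)}$ for $A=(i,j)$. *)

(* Defs.v *)
From HB Require Import structures.
From mathcomp Require Import all_boot all_order all_algebra.
Set Implicit Arguments. Unset Strict Implicit. Unset Printing Implicit Defensive.
Import GRing.Theory.
Local Open Scope ring_scope.

(* Letters of the generating set of S_d (1-based indices as in the paper):
   GS i = \hat s_i, GX i = \hat x_i, GC i = \hat c_i. *)
Inductive gen := GS of nat | GX of nat | GC of nat.

Definition gen_ok (d : nat) (g : gen) : bool :=
  match g with
  | GS i => (1 <= i < d)%N
  | GX i => (1 <= i <= d)%N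
  | GC i => (1 <= i <= d)%N
  end.

Definition isX (g : gen) : bool := if g is GX _ then true else false.

Definition nX (w : seq gen) : nat := count isX w.

Section InAlgebra.
Variables (R : comPzRingType) (A : algType R) (s x c : nat -> A).

Definition evalg (g : gen) : A :=
  match g with GS i => s i | GX i => x i | GC i => c i end.

Definition evalw (w : seq gen) : A := \prod_(g <- w) evalg g.

Definition inSpan (d : nat) (P : seq gen -> bool) (v : A) : Prop :=
  exists ws : seq (R * seq gen),
    all (fun p => all (gen_ok d) p.2 && P p.2) ws /\
    v = \sum_(p <- ws) p.1 *: evalw p.2.

Definition inF (d k : nat) (v : A) : Prop := inSpan d (fun w => nX w <= k)%N v.

(* The defining relations of S^f_d, with f(x) = x^l + sum_{k<l} b_k x^k. *)
Definition Sf_rels (l d : nat) (b : nat -> R) : Prop :=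
  (
      (forall i, (1 <= i < d)%N -> s i * s i = 1) /\
      (forall i, (1 <= i)%N -> (i.+1 < d)%N ->
         s i * s i.+1 * s i = s i.+1 * s i * s i.+1) /\
      (forall i j, (1 <= i < d)%N -> (1 <= j < d)%N -> (i.+1 < j)%N ->
         s i * s j = s j * s i) /\
      (forall i j, (1 <= i <= d)%N -> (1 <= j <= d)%N -> x i * x j = x j * x i) /\
      (forall i, (1 <= i <= d)%N -> c i * c i = 1) /\
      (forall i j, (1 <= i <= d)%N -> (1 <= j <= d)%N -> i != j ->
         c i * c j = - (c j * c i)) /\
      ( (forall i, (1 <= i <= d)%N -> x i * c i = - (c i * x i)) /\
          (forall i j, (1 <= i <= d)%N -> (1 <= j <= d)%N -> i != j ->
             x i * c j = c j * x i) /\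
          (forall i, (1 <= i < d)%N -> s i * c i = c i.+1 * s i) /\
          (forall i j, (1 <= i < d)%N -> (1 <= j <= d)%N -> j != i -> j != i.+1 ->
             s i * c j = c j * s i) /\
          (forall i, (1 <= i < d)%N ->
             s i * x i = x i.+1 * s i - 1 - c i * c i.+1) /\
          (forall i j, (1 <= i < d)%N -> (1 <= j <= d)%N -> j != i -> j != i.+1 ->
             s i * x j = x j * s i) /\
          x 1 ^+ l + \sum_(k < l) b k *: x 1 ^+ k = 0 )).

(* The image of
   a permutation is computed from an explicit word in the \hat s_i; since the
   \hat s_i satisfy the Coxeter relations, this is the image of the
   permutation under the homomorphism Sigma_d -> S^f_d, independent of the
   word. *)

(* transposition (p q), p < q : s_p s_{p+1} ... s_{q-1} ... s_{p+1} s_p *)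
Definition tw (p q : nat) : A :=
  (\prod_(k <- iota p (q - p)) s k) * (\prod_(k <- rev (iota p (q.-1 - p))) s k).

Definition tr (p q : nat) : A :=
  if (p < q)%N then tw p q else if (q < p)%N then tw q p else 1.

(* sigma_A for A = (i_1,...,i_a): equals (i_1 i_2)(i_2 i_3)...(i_{a-1} i_a) *)
Definition cycA (As : seq nat) : A :=
  \prod_(j < (size As).-1) tr (nth 0%N As j) (nth 0%N As j.+1).

Definition calpha (As : seq nat) (al : {ffun 'I_(size As) -> bool}) : A :=
  \prod_(j < size As) (if al j then c (nth 0%N As j) else 1).

(* epsilon^alpha_j  (0-based j, i.e. product over earlier positions) *)
Definition epsA (As : seq nat) (al : {ffun 'I_(size As) -> bool}) (j : 'I_(size As)) : A :=
  (-1) ^+ (\sum_(k < size As | (k < j)%N) (al k : nat))%N.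

Definition hterm (l : nat) (As : seq nat) (al : {ffun 'I_(size As) -> bool}) (r : nat) : A :=
  let N := ((size As).-1 * l.-1 + r)%N in
  \sum_(rs : {ffun 'I_(size As) -> 'I_N.+1} | (\sum_(j < size As) (rs j : nat))%N == N)
    \prod_(j < size As) (epsA al j * x (nth 0%N As j)) ^+ rs j.

Definition absal (As : seq nat) (al : {ffun 'I_(size As) -> bool}) : nat :=
  (\sum_(j < size As) (al j : nat))%N.

(* tau_alpha = (-1)^(|alpha|/2 + sum_j j alpha_j), j 1-based *)
Definition tau (As : seq nat) (al : {ffun 'I_(size As) -> bool}) : A :=
  (-1) ^+ ((absal al)./2 + \sum_(j < size As) (j.+1 * al j))%N.

Definition Ar (l : nat) (As : seq nat) (r : nat) : A :=
  \sum_(al : {ffun 'I_(size As) -> bool} | ~~ odd (absal al))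
    tau al * (hterm l al r * cycA As * calpha al).

Definition y (l i : nat) : A := \sum_(1 <= j < i) Ar l [:: i; j] 0.

End InAlgebra.

(* Main.v *)
Require Import Defs.
From HB Require Import structures.
From mathcomp Require Import all_boot all_order all_algebra.
From mathcomp Require Import zify ring.
Import GRing.Theory.
Local Open Scope ring_scope.
Set Implicit Arguments. Unset Strict Implicit.

Section Span.
Variables (R : comPzRingType) (A : algType R) (s x c : nat -> A) (d : nat).

Notation iS := (inSpan s x c d).

Lemma evalw_cat w1 w2 : evalw s x c (w1 ++ w2) = evalw s x c w1 * evalw s x c w2.
Proof. by rewrite /evalw big_cat. Qed.

Lemma span0 P : iS P 0.
Proof. by exists [::]; split => //; rewrite big_nil. Qed.

Lemma spanD P u v : iS P u -> iS P v -> iS P (u + v).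
Proof.
move=> [w1 [h1 ->]] [w2 [h2 ->]]; exists (w1 ++ w2); split.
  by rewrite all_cat h1 h2.
by rewrite big_cat.
Qed.

Lemma spanZ P a v : iS P v -> iS P (a *: v).
Proof.
move=> [w [h ->]]; exists [seq (a * p.1, p.2) | p <- w]; split.
  by rewrite all_map.
rewrite big_map scaler_sumr; apply: eq_bigr => p _; by rewrite scalerA.
Qed.

Lemma spanN P v : iS P v -> iS P (- v).
Proof. by move=> h; rewrite -scaleN1r; apply: spanZ. Qed.

Lemma spanB P u v : iS P u -> iS P v -> iS P (u - v).
Proof. by move=> h1 h2; apply: spanD => //; apply: spanN. Qed.

Lemma spanW (P Q : pred (seq gen)) v : (forall w, P w -> Q w) -> iS P v -> iS Q v.
Proof.
move=> PQ [w [h ->]]; exists w; split => //.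
by apply: sub_all h => p /andP [-> /PQ].
Qed.

Lemma span_word (P : pred (seq gen)) w : all (gen_ok d) w -> P w -> iS P (evalw s x c w).
Proof.
move=> h1 h2; exists [:: (1, w)]; split; first by rewrite /= h1 h2.
by rewrite big_seq1 scale1r.
Qed.

Lemma span_big (I : Type) (r : seq I) (F : I -> A) P :
  (forall i, iS P (F i)) -> iS P (\sum_(i <- r) F i).
Proof.
move=> h; elim: r => [|i r IH]; first by rewrite big_nil; apply: span0.
by rewrite big_cons; apply: spanD.
Qed.

Lemma spanM (P Q S : pred (seq gen)) u v :
  (forall w1 w2, P w1 -> Q w2 -> S (w1 ++ w2)) -> iS P u -> iS Q v -> iS S (u * v).
Proof.
move=> PQS [w1 [h1 ->]] [w2 [h2 ->]].
elim: w1 h1 => [|p w1 IH]; first by rewrite big_nil mul0r => _; apply: span0.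
rewrite /= big_cons mulrDl => /andP [/andP [hp1 hp2] hw]; apply: spanD; last exact: IH.
clear IH hw.
rewrite mulr_sumr; elim: w2 h2 => [|q w2 IH2]; first by rewrite big_nil => _; apply: span0.
rewrite /= big_cons => /andP [/andP [hq1 hq2] hw2]; apply: spanD; last exact: IH2.
rewrite -scalerAl -scalerAr scalerA -evalw_cat; apply: spanZ; apply: span_word.
  by rewrite all_cat hp1 hq1.
exact: PQS.
Qed.

Definition Deg k v := iS (fun w => nX w <= k)%N v.
Definition Dm k v := iS (fun w => nX w < k)%N v.

Lemma nX_cat w1 w2 : nX (w1 ++ w2) = (nX w1 + nX w2)%N.
Proof. by rewrite /nX count_cat. Qed.

Lemma DegM a b u v : Deg a u -> Deg b v -> Deg (a + b) (u * v).
Proof. apply: spanM => w1 w2 h1 h2; rewrite nX_cat; lia. Qed.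
Lemma DmM a b u v : Dm a u -> Deg b v -> Dm (a + b) (u * v).
Proof. apply: spanM => w1 w2 h1 h2; rewrite nX_cat; lia. Qed.
Lemma MDm a b u v : Deg a u -> Dm b v -> Dm (a + b) (u * v).
Proof. apply: spanM => w1 w2 h1 h2; rewrite nX_cat; lia. Qed.
Lemma DegW a b v : (a <= b)%N -> Deg a v -> Deg b v.
Proof. move=> h; apply: spanW => w /= h'; lia. Qed.
Lemma DmW a b v : (a <= b)%N -> Dm a v -> Dm b v.
Proof. move=> h; apply: spanW => w /= h'; lia. Qed.
Lemma DegDm a b v : (a < b)%N -> Deg a v -> Dm b v.
Proof. move=> h; apply: spanW => w /= h'; lia. Qed.
Lemma DmDeg a v : Dm a v -> Deg a v.
Proof. apply: spanW => w /= h'; lia. Qed.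

Lemma Deg1 : Deg 0 1.
Proof. have := @span_word (fun w => nX w <= 0)%N [::] isT isT. by rewrite /evalw big_nil. Qed.

Lemma DegXi i : (1 <= i <= d)%N -> Deg 1 (x i).
Proof.
move=> h; have := @span_word (fun w => nX w <= 1)%N [:: GX i]; rewrite /evalw big_seq1 /=.
by apply; rewrite ?h.
Qed.
Lemma DegCi i : (1 <= i <= d)%N -> Deg 0 (c i).
Proof.
move=> h; have := @span_word (fun w => nX w <= 0)%N [:: GC i]; rewrite /evalw big_seq1 /=.
by apply; rewrite ?h.
Qed.
Lemma DegSi i : (1 <= i < d)%N -> Deg 0 (s i).
Proof.
move=> h; have := @span_word (fun w => nX w <= 0)%N [:: GS i]; rewrite /evalw big_seq1 /=.
by apply; rewrite ?h.
Qed.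
Lemma DegXn i k : (1 <= i <= d)%N -> Deg k (x i ^+ k).
Proof.
move=> h; elim: k => [|k IH]; first by rewrite expr0; apply: Deg1.
by rewrite exprSr -addn1; apply: DegM => //; apply: DegXi.
Qed.
Lemma DegD k u v : Deg k u -> Deg k v -> Deg k (u + v). Proof. exact: spanD. Qed.
Lemma DegB k u v : Deg k u -> Deg k v -> Deg k (u - v). Proof. exact: spanB. Qed.
Lemma DegN k v : Deg k v -> Deg k (- v). Proof. exact: spanN. Qed.
Lemma DmD k u v : Dm k u -> Dm k v -> Dm k (u + v). Proof. exact: spanD. Qed.
Lemma DmB k u v : Dm k u -> Dm k v -> Dm k (u - v). Proof. exact: spanB. Qed.
Lemma DmN k v : Dm k v -> Dm k (- v). Proof. exact: spanN. Qed.
Lemma Dm0 k : Dm k 0. Proof. exact: span0. Qed.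
Lemma DmZ k a v : Dm k v -> Dm k (a *: v). Proof. exact: spanZ. Qed.
Lemma DegZ k a v : Deg k v -> Deg k (a *: v). Proof. exact: spanZ. Qed.
Lemma Dm_big (I : Type) (r : seq I) (F : I -> A) k :
  (forall i, Dm k (F i)) -> Dm k (\sum_(i <- r) F i).
Proof. exact: span_big. Qed.
Lemma Deg_big (I : Type) (r : seq I) (F : I -> A) k :
  (forall i, Deg k (F i)) -> Deg k (\sum_(i <- r) F i).
Proof. exact: span_big. Qed.
Lemma Dm_big_cond (I : Type) (r : seq I) (P : pred I) (F : I -> A) k :
  (forall i, P i -> Dm k (F i)) -> Dm k (\sum_(i <- r | P i) F i).
Proof.
move=> h; rewrite big_mkcond; apply: Dm_big => i; case: ifP => [/h //|_]; exact: Dm0.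
Qed.
Lemma Deg_big_cond (I : Type) (r : seq I) (P : pred I) (F : I -> A) k :
  (forall i, P i -> Deg k (F i)) -> Deg k (\sum_(i <- r | P i) F i).
Proof.
move=> h; rewrite big_mkcond; apply: Deg_big => i; case: ifP => [/h //|_]; exact: span0.
Qed.
Lemma Dm_big_nat m n (F : nat -> A) k :
  (forall i, (m <= i < n)%N -> Dm k (F i)) -> Dm k (\sum_(m <= i < n) F i).
Proof. by move=> h; rewrite big_nat_cond; apply: Dm_big_cond => i /andP [/h]. Qed.
Lemma Deg_big_nat m n (F : nat -> A) k :
  (forall i, (m <= i < n)%N -> Deg k (F i)) -> Deg k (\sum_(m <= i < n) F i).
Proof. by move=> h; rewrite big_nat_cond; apply: Deg_big_cond => i /andP [/h]. Qed.
End Span.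

Definition mk2 (J : Type) (a b : J) : {ffun 'I_2 -> J} := [ffun k : 'I_2 => if val k == 0%N then a else b].

Arguments mk2 {J}.
Lemma sum_ffun2 (J : finType) (V : nmodType) (P : pred {ffun 'I_2 -> J}) (F : {ffun 'I_2 -> J} -> V) :
  \sum_(f | P f) F f = \sum_(a : J) \sum_(b : J | P (mk2 a b)) F (mk2 a b).
Proof.
rewrite pair_big_dep /=.
rewrite (reindex (fun p : J * J => mk2 p.1 p.2)) /=.
  by apply: eq_bigl => p.
exists (fun f => (f ord0, f ord_max)) => [p _|f _]; first by rewrite /mk2 !ffunE; case: p.
apply/ffunP => k; rewrite /mk2 ffunE /=.
case: k => [[|[|k]] hk] //=.
- by congr (f _); apply: val_inj.
- by congr (f _); apply: val_inj.
Qed.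

Lemma big_bool_sum (V : nmodType) (F : bool -> V) : \sum_(a : bool) F a = F true + F false.
Proof. by rewrite big_bool. Qed.

Lemma sum_ffun2_bool (V : nmodType) (P : pred {ffun 'I_2 -> bool}) (F : {ffun 'I_2 -> bool} -> V) :
  \sum_(f | P f) F f =
    ((if P (mk2 true true) then F (mk2 true true) else 0) +
     (if P (mk2 true false) then F (mk2 true false) else 0)) +
    ((if P (mk2 false true) then F (mk2 false true) else 0) +
     (if P (mk2 false false) then F (mk2 false false) else 0)).
Proof. by rewrite sum_ffun2 big_bool_sum big_mkcond big_bool_sum big_mkcond big_bool_sum. Qed.

Section ArE.
Variables (R : comPzRingType) (A : algType R) (s x c : nat -> A).

Lemma htermE (l i j : nat) (al : {ffun 'I_2 -> bool}) : (1 <= l)%N ->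
  hterm x l (As:=[:: i; j]) al 0 =
  \sum_(0 <= a < l) x i ^+ a * ((-1) ^+ al ord0 * x j) ^+ (l.-1 - a).
Proof.
move=> hl; rewrite /hterm /=.
set N := (1 * l.-1 + 0)%N.
rewrite sum_ffun2.
have HN : N = l.-1 by rewrite /N mul1n addn0.
transitivity (\sum_(a : 'I_N.+1) x i ^+ a * ((-1) ^+ al ord0 * x j) ^+ (N - a)).
  apply: eq_bigr => a _.
  rewrite (big_pred1 (inord (N - a))); last first.
    move=> b; rewrite /= !big_ord_recr big_ord0 /= /mk2 !ffunE /=.
    have ha := ltn_ord a; have hb := ltn_ord b.
    rewrite add0n -(inj_eq val_inj) /= inordK; last lia.
    by apply/eqP/eqP => h; lia.
  rewrite !big_ord_recr big_ord0 /= /mk2 !ffunE /= inordK; last by have := ltn_ord a; lia.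
  rewrite mul1r /epsA /= !big_mkcond !big_ord_recr !big_ord0 /=.
  rewrite expr0 mul1r big_mkcond !big_ord_recr big_ord0 /=.
  have -> : widen_ord (leqnSn 1) ord_max = ord0 :> 'I_2 by apply: val_inj.
  by rewrite add0n addn0.
clearbody N; have El : l = N.+1 by rewrite HN prednK.
subst l; by rewrite big_mkord.
Qed.

Lemma ArE (l i j : nat) : (1 <= l)%N ->
  Ar s x c l [:: i; j] 0 =
  \sum_(0 <= a < l) (x i ^+ a * x j ^+ (l.-1 - a) * tr s i j
     + x i ^+ a * (- x j) ^+ (l.-1 - a) * tr s i j * (c i * c j)).
Proof.
move=> hl; rewrite /Ar /=.
have EA a b : @absal [::i;j] (mk2 a b) = (a + b)%N.
  by rewrite /absal /= !big_ord_recr big_ord0 /mk2 !ffunE /=.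
have ET a b : @tau R A [:: i; j] (mk2 a b) = (-1) ^+ ((a + b)./2 + (a + 2 * b))%N.
  by rewrite /tau EA /= !big_ord_recr big_ord0 /mk2 !ffunE /= mul1n.
have EC a b : @calpha R A c [:: i; j] (mk2 a b) = (if a then c i else 1) * (if b then c j else 1).
  by rewrite /calpha /= !big_ord_recr big_ord0 /mk2 !ffunE /= mul1r.
rewrite sum_ffun2_bool !EA /= !ET !EC /= !htermE // /mk2 !ffunE /=.
rewrite /cycA /= big_ord_recr big_ord0 /= mul1r.
rewrite -[(-1) ^+ (1 + _)]signr_odd /= expr0 expr1 mulN1r mul1r !mulr1 addr0 add0r.
by rewrite big_split /= !mul1r !mulr_suml addrC.
Qed.
End ArE.
Lemma subr_trans (V : zmodType) (a b c : V) : a - b + (b - c) = a - c.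
Proof. by rewrite addrA subrK. Qed.

Lemma zm1 (V : zmodType) (a p q : V) : a - p - q - a = - (p + q).
Proof. by rewrite addrAC (addrAC a) subrr add0r opprD. Qed.

Section Main.
Variables (R : comPzRingType) (A : algType R) (s x c : nat -> A) (l d : nat).
Hypothesis Hss : forall i, (1 <= i < d)%N -> s i * s i = 1.
Hypothesis Hbr : forall i, (1 <= i)%N -> (i.+1 < d)%N -> s i * s i.+1 * s i = s i.+1 * s i * s i.+1.
Hypothesis Hscom : forall i j, (1 <= i < d)%N -> (1 <= j < d)%N -> (i.+1 < j)%N -> s i * s j = s j * s i.
Hypothesis Hxc : forall i, (1 <= i <= d)%N -> x i * c i = - (c i * x i).
Hypothesis Hxcj : forall i j, (1 <= i <= d)%N -> (1 <= j <= d)%N -> i != j -> x i * c j = c j * x i.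
Hypothesis Hsc : forall i, (1 <= i < d)%N -> s i * c i = c i.+1 * s i.
Hypothesis Hscj : forall i j, (1 <= i < d)%N -> (1 <= j <= d)%N -> j != i -> j != i.+1 -> s i * c j = c j * s i.
Hypothesis Hsx : forall i, (1 <= i < d)%N -> s i * x i = x i.+1 * s i - 1 - c i * c i.+1.
Hypothesis Hsxj : forall i j, (1 <= i < d)%N -> (1 <= j <= d)%N -> j != i -> j != i.+1 -> s i * x j = x j * s i.

Notation DG := (Deg s x c d).
Notation DM := (Dm s x c d).
Definition eqm m u v := DM m (u - v).

Lemma eqm_refl m u : eqm m u u.
Proof. by rewrite /eqm subrr; apply: Dm0. Qed.
Lemma eqm_sym m u v : eqm m u v -> eqm m v u.
Proof. by move=> h; rewrite /eqm -opprB; apply: DmN. Qed.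
Lemma eqm_trans m u v w : eqm m u v -> eqm m v w -> eqm m u w.
Proof. by move=> h1 h2; have := DmD h1 h2; rewrite subr_trans. Qed.
Lemma eqm_add m u1 v1 u2 v2 : eqm m u1 v1 -> eqm m u2 v2 -> eqm m (u1 + u2) (v1 + v2).
Proof. by move=> h1 h2; have := DmD h1 h2; rewrite /eqm opprD addrACA. Qed.
Lemma eqm_W m n u v : (m <= n)%N -> eqm m u v -> eqm n u v.
Proof. exact: DmW. Qed.
Lemma eqm_mulr m k u v w : eqm m u v -> DG k w -> eqm (m + k) (u * w) (v * w).
Proof. by rewrite /eqm -mulrBl; apply: DmM. Qed.
Lemma eqm_mull m k u v w : DG k w -> eqm m u v -> eqm (k + m) (w * u) (w * v).
Proof. by rewrite /eqm -mulrBr; apply: MDm. Qed.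
Lemma eqm_small m u r : DM m r -> eqm m (u + r) u.
Proof. by rewrite /eqm (addrC u) addrK. Qed.
Lemma eqm_sum_nat m a n F G : (forall k, (a <= k < n)%N -> eqm m (F k) (G k)) ->
  eqm m (\sum_(a <= k < n) F k) (\sum_(a <= k < n) G k).
Proof. by move=> h; rewrite /eqm -sumrB; apply: Dm_big_nat. Qed.

Lemma DegPow v n : DG 1 v -> DG n (v ^+ n).
Proof.
move=> h; elim: n => [|n IH]; first by rewrite expr0; apply: Deg1.
by rewrite exprSr -addn1; apply: DegM.
Qed.

Lemma DegM0 u v : DG 0 u -> DG 0 v -> DG 0 (u * v).
Proof. exact: DegM. Qed.

Lemma DegProd r : (forall k, k \in r -> (1 <= k < d)%N) -> DG 0 (\prod_(k <- r) s k).
Proof.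
elim: r => [|k r IH] h; first by rewrite big_nil; apply: Deg1.
rewrite big_cons; apply: DegM0; first by apply: DegSi; apply: h; rewrite inE eqxx.
by apply: IH => k' hk'; apply: h; rewrite inE hk' orbT.
Qed.

Lemma DegTw p q : (1 <= p)%N -> (q <= d)%N -> DG 0 (tw s p q).
Proof.
move=> hp hq; rewrite /tw; apply: DegM0; apply: DegProd => k.
  by rewrite mem_iota => /andP [h1 h2]; lia.
by rewrite mem_rev mem_iota => /andP [h1 h2]; lia.
Qed.

Lemma DegTr p q : (1 <= p <= d)%N -> (1 <= q <= d)%N -> DG 0 (tr s p q).
Proof.
move=> /andP [h1 h2] /andP [h3 h4]; rewrite /tr.
case: ifP => _; first by apply: DegTw.
case: ifP => _; first by apply: DegTw.
exact: Deg1.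
Qed.

Lemma comm_prod m r : (forall k, k \in r -> s m * s k = s k * s m) ->
  s m * \prod_(k <- r) s k = (\prod_(k <- r) s k) * s m.
Proof.
elim: r => [|k r IH] h; first by rewrite big_nil mul1r mulr1.
rewrite big_cons mulrA h ?inE ?eqxx // -!mulrA IH //.
by move=> k' hk'; apply: h; rewrite inE hk' orbT.
Qed.

Lemma tw_conj j n : (1 <= j <= n)%N -> (n.+1 < d)%N ->
  s n.+1 * tw s j n.+1 * s n.+1 = tw s j n.+2.
Proof.
move=> /andP [hj hjn] hn.
rewrite /tw /=.
have E1 : (n.+1 - j = (n - j) + 1)%N by lia.
have E2 : (n.+2 - j = (n - j) + 2)%N by lia.
have E3 : (n.+1 - j = (n - j).+1)%N by lia.
have E4 : (j + (n - j) = n)%N by lia.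
rewrite E1 E2 !iotaD E4 !rev_cat /= !big_cat /= !big_cons !big_nil !mulr1.
set P := \prod_(k <- iota j (n - j)) s k.
set Q := \prod_(k <- rev (iota j (n - j))) s k.
have HC : forall k, k \in iota j (n - j) -> s n.+1 * s k = s k * s n.+1.
  move=> k; rewrite mem_iota => /andP [h1 h2]; symmetry; apply: Hscom; lia.
have HP : s n.+1 * P = P * s n.+1 by apply: comm_prod.
have HQ : s n.+1 * Q = Q * s n.+1.
  by apply: comm_prod => k; rewrite mem_rev; apply: HC.
transitivity (P * (s n.+1 * s n * s n.+1) * Q).
  by rewrite !mulrA HP -!mulrA -HQ !mulrA.
rewrite -Hbr; [by rewrite !mulrA|lia|lia].
Qed.

Lemma L1 i k : (1 <= i < d)%N -> DM k (s i * x i ^+ k - x i.+1 ^+ k * s i).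
Proof.
move=> hi; elim: k => [|k IH]; first by rewrite !expr0 mulr1 mul1r subrr; apply: Dm0.
have -> : s i * x i ^+ k.+1 - x i.+1 ^+ k.+1 * s i =
   (s i * x i ^+ k - x i.+1 ^+ k * s i) * x i + x i.+1 ^+ k * (s i * x i - x i.+1 * s i).
  by rewrite mulrBl mulrBr !mulrA subr_trans !exprSr !mulrA.
rewrite -addn1; apply: DmD.
  by apply: DmM => //; apply: DegXi; lia.
apply: (@DegDm _ _ _ _ _ _ (k + 0)); first lia.
apply: DegM; first by apply: DegXn; lia.
rewrite Hsx // zm1; apply: DegN; apply: DegD; first exact: Deg1.
by apply: DegM0; apply: DegCi; lia.
Qed.

Lemma L2 i k : (1 <= i < d)%N -> eqm k (s i * x i ^+ k * s i) (x i.+1 ^+ k).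
Proof.
move=> hi; rewrite /eqm.
have -> : s i * x i ^+ k * s i - x i.+1 ^+ k = (s i * x i ^+ k - x i.+1 ^+ k * s i) * s i.
  by rewrite mulrBl -(mulrA _ (s i)) Hss // mulr1.
have h1 : DM k (s i * x i ^+ k - x i.+1 ^+ k * s i) by apply: L1.
have h2 : DG 0 (s i) by apply: DegSi.
by have := DmM h1 h2; rewrite addn0.
Qed.

Lemma cxm i m : (1 <= i <= d)%N -> c i * x i ^+ m = (- x i) ^+ m * c i.
Proof.
move=> hi; elim: m => [|m IH]; first by rewrite !expr0 mulr1 mul1r.
rewrite !exprSr mulrA IH -!mulrA; congr (_ * _).
by rewrite mulNr Hxc // opprK.
Qed.

Lemma cjxm i j m : (1 <= i <= d)%N -> (1 <= j <= d)%N -> i != j ->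
  c j * x i ^+ m = x i ^+ m * c j.
Proof.
move=> hi hj hij; have h : GRing.comm (c j) (x i) by rewrite /GRing.comm Hxcj.
exact: commrX.
Qed.

Lemma sc1 i : (1 <= i < d)%N -> s i * c i.+1 = c i * s i.
Proof.
move=> hi.
have -> : s i * c i.+1 = s i * (c i.+1 * s i) * s i by rewrite -!mulrA Hss // mulr1.
by rewrite -Hsc // mulrA Hss // mul1r.
Qed.

Lemma sconj_c i : (1 <= i < d)%N -> s i * c i * s i = c i.+1.
Proof. by move=> hi; rewrite Hsc // -mulrA Hss // mulr1. Qed.

Lemma sconj_cj i j : (1 <= i < d)%N -> (1 <= j <= d)%N -> j != i -> j != i.+1 ->
  s i * c j * s i = c j.
Proof. by move=> *; rewrite Hscj // -mulrA Hss // mulr1. Qed.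

Lemma powconj i w k : (1 <= i < d)%N -> (s i * w * s i) ^+ k = s i * w ^+ k * s i.
Proof.
move=> hi; elim: k => [|k IH]; first by rewrite !expr0 mulr1 Hss.
rewrite exprSr IH !mulrA -(mulrA _ (s i) (s i)) Hss // mulr1.
by rewrite -(mulrA (s i) (w ^+ k) w) [w ^+ k.+1]exprSr.
Qed.

Lemma expand u e n : DG 1 u -> DG 0 e ->
  eqm n.-1 ((u + e) ^+ n) (u ^+ n + \sum_(0 <= k < n) u ^+ k * e * u ^+ (n.-1 - k)).
Proof.
move=> hu he; elim: n => [|n IH].
  by rewrite big_geq // addr0 !expr0; apply: eqm_refl.
case: n IH => [|n] IH.
  by rewrite big_nat1 !expr1 !expr0 mulr1 mul1r; apply: eqm_refl.
set S := \sum_(0 <= k < n.+1) u ^+ k * e * u ^+ (n.+1.-1 - k).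
have ES : \sum_(0 <= k < n.+2) u ^+ k * e * u ^+ (n.+2.-1 - k) = S * u + u ^+ n.+1 * e.
  rewrite big_nat_recr //= subnn expr0 mulr1 mulr_suml; congr (_ + _).
  apply: eq_big_nat => k hk; have -> : (n.+2.-1 - k = (n.+1.-1 - k).+1)%N by lia.
  by rewrite exprSr mulrA.
rewrite ES exprSr /=.
apply: (@eqm_trans _ _ ((u ^+ n.+1 + S) * (u + e))).
  by have := eqm_mulr IH (DegD hu (DegW (leq0n 1) he)); rewrite addn1.
apply: (@eqm_trans _ _ (u ^+ n.+2 + (S * u + u ^+ n.+1 * e) + S * e)); last first.
  apply: eqm_small; rewrite /S mulr_suml; apply: Dm_big_nat => k hk.
  apply: (@DegDm _ _ _ _ _ _ (k + 0 + (n - k) + 0)); first lia.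
  apply: DegM => //; apply: DegM; last exact: DegPow.
  by apply: DegM => //; exact: DegPow.
rewrite mulrDl !mulrDr !addrA [u ^+ n.+2]exprSr.
rewrite [in X in eqm _ _ X](addrAC _ (S * u)); exact: eqm_refl.
Qed.

Lemma conjM i u v : (1 <= i < d)%N -> s i * (u * v) * s i = (s i * u * s i) * (s i * v * s i).
Proof.
by move=> hi; rewrite !mulrA -(mulrA (s i * u) (s i) (s i)) Hss // mulr1.
Qed.

Lemma G1 i a m w Q : (1 <= i < d)%N -> s i * w = w * s i -> DG m w -> DG 0 Q ->
  eqm (a + m) (s i * (x i ^+ a * w * Q) * s i) (x i.+1 ^+ a * w * (s i * Q * s i)).
Proof.
move=> hi hw Hw HQ; rewrite /eqm.
have -> : s i * (x i ^+ a * w * Q) * s i - x i.+1 ^+ a * w * (s i * Q * s i) =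
   (s i * x i ^+ a - x i.+1 ^+ a * s i) * w * Q * s i.
  rewrite !mulrBl !mulrA -(mulrA (x i.+1 ^+ a) (s i) w) hw !mulrA.
  by congr (_ - _); rewrite !mulrA.
rewrite -(addn0 (a + m)%N) -(addn0 (a + m + 0)%N).
apply: DmM; last exact: DegSi.
apply: DmM => //; apply: DmM => //; exact: L1.
Qed.

Definition Zt (i j a : nat) := x i ^+ a * x j ^+ (l.-1 - a) * tr s i j
     + x i ^+ a * (- x j) ^+ (l.-1 - a) * tr s i j * (c i * c j).
Definition Z i j := \sum_(0 <= a < l) Zt i j a.

Lemma A1 n j : (1 <= j <= n)%N -> (n.+1 < d)%N ->
  eqm l.-1 (s n.+1 * Z n.+1 j * s n.+1) (Z n.+2 j).
Proof.
move=> hj hn; have hi : (1 <= n.+1 < d)%N by lia.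
have hjd : (1 <= j <= d)%N by lia.
have hT : tr s n.+1 j = tw s j n.+1 by rewrite /tr ifF ?ifT //; lia.
have hT' : tr s n.+2 j = tw s j n.+2 by rewrite /tr ifF ?ifT //; lia.
rewrite /Z mulr_sumr mulr_suml; apply: eqm_sum_nat => a ha.
have Ea : (a + (l.-1 - a) = l.-1)%N by lia.
have hcx : s n.+1 * x j = x j * s n.+1 by apply: Hsxj => //; lia.
rewrite /Zt mulrDr mulrDl; apply: eqm_add.
  apply: (@eqm_W (a + (l.-1 - a))%N); first lia.
  rewrite hT hT' -(tw_conj hj hn); apply: G1 => //.
  - by apply: commrX.
  - by apply: DegXn.
  - by apply: DegTw; lia.
apply: (@eqm_W (a + (l.-1 - a))%N); first lia.
have EQ : s n.+1 * (tw s j n.+1 * (c n.+1 * c j)) * s n.+1 = tw s j n.+2 * (c n.+2 * c j).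
  by rewrite (conjM (tw s j n.+1)) // (conjM (c n.+1)) // tw_conj // sconj_c // sconj_cj //; lia.
rewrite hT hT' -!(mulrA _ (tw s j _)) -EQ; apply: G1 => //.
- by apply: commrX; apply: commrN.
- by apply: DegPow; apply: DegN; apply: DegXi.
- apply: DegM0; first by apply: DegTw; lia.
  by apply: DegM0; apply: DegCi; lia.
Qed.

Lemma trS i : tr s i.+1 i = s i.
Proof.
rewrite /tr ifF ?ifT //; last by lia.
by rewrite /tw subSnn subnn /= big_cons !big_nil !mulr1.
Qed.

Lemma A2 i : (1 <= i < d)%N ->
  eqm l.-1 (\sum_(0 <= k < l) (s i * x i * s i) ^+ k * ((1 + c i * c i.+1) * s i)
                 * (s i * x i * s i) ^+ (l.-1 - k)) (Z i.+1 i).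
Proof.
move=> hi; have hid : (1 <= i <= d)%N by lia.
have hi1 : (1 <= i.+1 <= d)%N by lia.
apply: eqm_sum_nat => k hk.
rewrite !powconj //.
set m := (l.-1 - k)%N.
have -> : s i * x i ^+ k * s i * ((1 + c i * c i.+1) * s i) * (s i * x i ^+ m * s i)
   = (s i * x i ^+ k * s i) * ((1 + c i * c i.+1) * x i ^+ m * s i).
  rewrite -!mulrA; congr (_ * (_ * (_ * _))).
  by rewrite !mulrA -(mulrA _ (s i) (s i)) Hss // mulr1.
apply: (@eqm_trans _ _ (x i.+1 ^+ k * ((1 + c i * c i.+1) * x i ^+ m * s i))).
  apply: (@eqm_W (k + m)); first by rewrite /m; lia.
  apply: eqm_mulr; first exact: L2.
  have := DegM (DegM (DegD (@Deg1 _ _ s x c d) (DegM0 (DegCi s x c hid) (DegCi s x c hi1))) (DegXn s x c m hid)) (DegSi s x c hi).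
  by rewrite add0n addn0.
have hcc : c i * c i.+1 * s i = s i * (c i.+1 * c i).
  by rewrite [RHS]mulrA sc1 // -[RHS]mulrA Hsc // mulrA.
suff -> : x i.+1 ^+ k * ((1 + c i * c i.+1) * x i ^+ m * s i) = Zt i.+1 i k by apply: eqm_refl.
rewrite /Zt trS.
rewrite !mulrDl mul1r mulrDr; congr (_ + _); first by rewrite !mulrA.
rewrite -(mulrA (c i)) cjxm //; last by rewrite neq_ltn ltnSn.
rewrite (mulrA (c i)) cxm //.
rewrite -!(mulrA (x i.+1 ^+ k * (- x i) ^+ (l.-1 - k))) -hcc.
by rewrite !mulrA.
Qed.

Definition Y i := \sum_(1 <= j < i) Z i j.

Lemma DegY i : (1 <= i <= d)%N -> DG l.-1 (Y i).
Proof.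
move=> hi; rewrite /Y; apply: Deg_big_nat => j hj; rewrite /Z.
apply: Deg_big_nat => a ha; rewrite /Zt.
have hjd : (1 <= j <= d)%N by lia.
apply: (@DegW _ _ _ _ _ _ (a + (l.-1 - a) + 0 + 0)%N); first lia.
apply: DegD; first (rewrite addn0; apply: DegM; last by apply: DegTr).
- by apply: DegM; apply: DegXn.
apply: DegM; first apply: DegM; last by apply: DegM0; apply: DegCi.
- by apply: DegM; [apply: DegXn | apply: DegPow; apply: DegN; apply: DegXi].
- by apply: DegTr.
Qed.

Lemma base b : (1 <= l)%N -> (1 <= d)%N ->
  (forall k, (k < l)%N -> odd k != odd l -> b k = 0) ->
  x 1 ^+ l + \sum_(k < l) b k *: x 1 ^+ k = 0 -> eqm l.-1 (x 1 ^+ l) (Y 1).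
Proof.
move=> hl hd Hb Hf; rewrite /eqm /Y big_geq // subr0.
have -> : x 1 ^+ l = - \sum_(k < l) b k *: x 1 ^+ k by apply/eqP; rewrite -addr_eq0 Hf.
apply: DmN; apply: Dm_big_cond => k _.
case: (boolP (odd k == odd l)) => h; last by rewrite Hb // scale0r; apply: Dm0.
apply: DmZ; apply: (@DegDm _ _ _ _ _ _ k); last by apply: DegXn; lia.
have hk := ltn_ord k.
have : (k : nat) != l.-1.
  apply/eqP => E; move: h; rewrite E; case: (l) hl => //= n _; by case: (odd n).
lia.
Qed.

Lemma stepY n : (n.+1 <= d)%N -> (1 <= l)%N ->
  eqm l.-1 (x n.+1 ^+ l) (Y n.+1) -> (n.+2 <= d)%N -> eqm l.-1 (x n.+2 ^+ l) (Y n.+2).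
Proof.
move=> _ hl IH hn; set i := n.+1.
have hi : (1 <= i < d)%N by rewrite /i; lia.
have hid : (1 <= i <= d)%N by rewrite /i; lia.
have HX : x i.+1 = s i * x i * s i + (1 + c i * c i.+1) * s i.
  have -> : x i.+1 = x i.+1 * s i * s i by rewrite -mulrA Hss // mulr1.
  rewrite -mulrDl; congr (_ * _); rewrite Hsx //.
  by rewrite -(addrA (x i.+1 * s i)) -opprD subrK.
rewrite HX.
have hu : DG 1 (s i * x i * s i).
  have := DegM (DegM (DegSi s x c hi) (DegXi s x c hid)) (DegSi s x c hi); by rewrite add0n addn0.
have he : DG 0 ((1 + c i * c i.+1) * s i).
  apply: DegM0; last exact: DegSi.
  by apply: DegD; [exact: (@Deg1 _ _ s x c d)|apply: DegM0; apply: DegCi; lia].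
apply: eqm_trans (expand l hu he) _.
rewrite powconj //.
have -> : Y i.+1 = \sum_(1 <= j < i) Z i.+1 j + Z i.+1 i by rewrite /Y big_nat_recr //.
apply: eqm_add; last exact: A2.
apply: (@eqm_trans _ _ (s i * Y i * s i)).
  have := eqm_mulr (eqm_mull (DegSi s x c hi) IH) (DegSi s x c hi); by rewrite add0n addn0.
rewrite /Y mulr_sumr mulr_suml; apply: eqm_sum_nat => j hj.
apply: A1; lia.
Qed.
End Main.

Unset Implicit Arguments.
Set Strict Implicit.

Theorem mainTheorem7 (R : comPzRingType) (l d : nat) (b : nat -> R) :
  (1 <= l)%N -> (1 <= d)%N ->
  (forall k, (k < l)%N -> odd k != odd l -> b k = 0) ->
  forall (A : algType R) (s x c : nat -> A),
  Sf_rels s x c l d b ->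
  forall i, (1 <= i <= d)%N ->
    inF s x c d l.-1 (x i ^+ l) /\
    inSpan s x c d (fun w => (nX w).+2 <= l)%N (x i ^+ l - y s x c l i).
Proof.
move=> hl hd Hb A s x c Hrel i hi.
case: Hrel => Hss [Hbr [Hscom [Hxx [Hcc [Hcac [Hxc [Hxcj [Hsc [Hscj [Hsx [Hsxj Hf]]]]]]]]]]].
have key : forall n, (n.+1 <= d)%N -> eqm s x c d l.-1 (x n.+1 ^+ l) (Y s x c l n.+1).
  elim => [|n IH] hn; first exact: (base s c hl hd Hb Hf).
  have hn1 : (n.+1 <= d)%N by lia.
  exact: (stepY Hss Hbr Hscom Hxc Hxcj Hsc Hscj Hsx Hsxj hn1 hl (IH hn1) hn).
have yY : y s x c l i = Y s x c l i.
  by rewrite /y /Y; apply: eq_big_nat => j _; rewrite ArE.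
rewrite yY; case: i hi yY => [//|n] hi _.
have h := key n (proj2 (andP hi)).
split.
  rewrite /inF -(subrK (Y s x c l n.+1) (x n.+1 ^+ l)).
  apply: DegD; first exact: DmDeg.
  by apply: DegY.
apply: spanW h => w /=; lia.
Qed.
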